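(* Let $\mathcal{M}=(\mathcal{S},\mathcal{A},p,r,\gamma)$ be a finite MDP with discount $\gamma\in[0,1)$ whose action space is factored as $\mathcal{A}=\mathcal{A}_1\times\cdots\times\mathcal{A}_D$, and let $\pi:\mathcal{S}\to\Delta(\mathcal{A})$ be a policy. Suppose there exist state abstractions $\phi_d:\mathcal{S}\to\mathcal{Z}_d$ ($d=1,\dots,D$), writing $\boldsymbol{\phi}=(\phi_1,\dots,\phi_D)$, $z_d=\phi_d(s)$, $z'_d=\phi_d(s')$, together with functions $p_d:\mathcal{Z}_d\times\mathcal{A}_d\to\Delta(\mathcal{Z}_d)$, $r_d:\mathcal{Z}_d\times\mathcal{A}_d\to\mathbb{R}$ and $\pi_d:\mathcal{Z}_d\to\Delta(\mathcal{A}_d)$, such that for all $s,s'\in\mathcal{S}$ and all $\boldsymbol{a}=(a_1,\dots,a_D)\in\mathcal{A}$: (i) $\sum_{\tilde{s}\in\boldsymbol{\phi}^{-1}(\boldsymbol{\phi}(s'))} p(\tilde{s}\mid s,\boldsymbol{a})=\prod_{d=1}^D p_d(z'_d\mid z_d,a_d)$; (ii) $r(s,\boldsymbol{a})=\sum_{d=1}^D r_d(z_d,a_d)$; (iii) $\pi(\boldsymbol{a}\mid s)=\prod_{d=1}^D\pi_d(a_d\mid z_d)$. Then there exist functions $q_d:\mathcal{S}\times\mathcal{A}_d\to\mathbb{R}$ ($d=1,\dots,D$) such that $Q^\pi(s,\boldsymbol{a})=\sum_{d=1}^D q_d(s,a_d)$ for all $s\in\mathcal{S}$, $\boldsymbo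l{a}\in\mathcal{A}$.
   Context: An MDP $(\mathcal{S},\mathcal{A},p,r,\gamma)$ has transition kernel $p(s'\mid s,a)$, deterministic reward $r(s,a)$ and discount $\gamma$. For a policy $\pi$ (a map from states to distributions over actions), $Q^\pi(s,a)=\mathbb{E}\big[\sum_{t\ge1}\gamma^{t-1}r(s_t,a_t)\mid s_1=s,a_1=a\big]$ where $s_{t+1}\sim p(\cdot\mid s_t,a_t)$ and $a_{t}\sim\pi(\cdot\mid s_t)$ for $t\ge2$. A state abstraction is a map $\phi:\mathcal{S}\to\mathcal{Z}$; for $\boldsymbol{\phi}=(\phi_1,\dots,\phi_D)$ and $\boldsymbol{z}=(z_1,\dots,z_D)$, $\boldsymbol{\phi}^{-1}(\boldsymbol{z})=\{\tilde s\in\mathcal{S}:\phi_d(\tilde s)=z_d\ \forall d\}$. An action $\boldsymbol{a}\in\mathcal{A}_1\times\cdots\times\mathcal{A}_D$ is written as its vector of sub-actions $(a_1,\dots,a_D)$. *)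

(* Defs.v *)
From HB Require Import structures.
From mathcomp Require Import all_boot all_order all_algebra.
From mathcomp Require Import all_classical all_reals all_analysis.
Set Implicit Arguments. Unset Strict Implicit. Unset Printing Implicit Defensive.
Import Order.TTheory GRing.Theory Num.Theory numFieldNormedType.Exports.
Local Open Scope ring_scope.

(* A finite MDP: states S : finType, actions Act : finType.
   p s a s' = p(s' | s, a), r s a = r(s,a), pi s a = pi(a | s). *)

Definition is_distr {R : realType} {T : finType} (f : T -> R) : Prop :=
  (forall x, 0 <= f x) /\ \sum_(x : T) f x = 1.

(* Joint law of (s_{t+1}, a_{t+1}) given s_1 = s, a_1 = a (index t from 0). *)
Fixpoint sa_law {R : realType} {S Act : finType}
  (p : S -> Act -> S -> R) (pi : S -> Act -> R) (s : S) (a : Act) (t : nat)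
  : S -> Act -> R :=
  match t with
  | 0 => fun s' a' => if (s' == s) && (a' == a) then 1 else 0
  | t'.+1 => fun s' a' =>
      \sum_(x : S) \sum_(y : Act) sa_law p pi s a t' x y * p x y s' * pi s' a'
  end.

Definition exp_reward {R : realType} {S Act : finType}
  (p : S -> Act -> S -> R) (r : S -> Act -> R) (pi : S -> Act -> R)
  (s : S) (a : Act) (t : nat) : R :=
  \sum_(x : S) \sum_(y : Act) sa_law p pi s a t x y * r x y.

(* Q^pi(s,a) = sum_{t>=1} gamma^{t-1} E[r(s_t,a_t)]  (limit of partial sums;
   by linearity of expectation this is the expectation of the discounted return) *)
Definition Qpi {R : realType} {S Act : finType}
  (p : S -> Act -> S -> R) (r : S -> Act -> R) (gamma : R)
  (pi : S -> Act -> R) (s : S) (a : Act) : R :=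
  limn (series (fun t => gamma ^+ t * exp_reward p r pi s a t)).

(* Main.v *)
Require Import Defs.
From HB Require Import structures.
From mathcomp Require Import all_boot all_order all_algebra.
From mathcomp Require Import all_classical all_reals all_analysis.
Import Order.TTheory GRing.Theory Num.Theory numFieldNormedType.Exports.
Local Open Scope ring_scope.
Lemma sum_prod_dep {R : comNzRingType} {I : finType} {T : I -> finType}
  (F : forall i, T i -> R) :
  \sum_(f : {dffun forall i, T i}) \prod_i F i (f i) = \prod_i \sum_(x : T i) F i x.
Proof.
pose P_ := fun i => [ffun x : T i => F i x].
transitivity (\prod_i \sum_(x : T i) P_ i x); last first.
  by apply: eq_bigr => i _; apply: eq_bigr => x _; rewrite ffunE.
under eq_bigr do rewrite (big_tag (fun i (x : T i) => P_ i x)).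
rewrite bigA_distr_big_dep -big_fprod.
rewrite (reindex (@fprod_of_dffun I T)); last exact/onW_bij/fprod_of_dffun_bij.
apply: eq_bigr => f _; apply: eq_bigr => i _.
by rewrite /fprod_of_dffun fprodE ffunE.
Qed.

Lemma sum_prod_dep1 {R : comNzRingType} {I : finType} {T : I -> finType}
  (F : forall i, T i -> R) (d : I) (b : T d) :
  \sum_(f : {dffun forall i, T i} | f d == b) \prod_i F i (f i)
  = F d b * \prod_(i | i != d) \sum_(x : T i) F i x.
Proof.
pose F' := fun i (x : T i) => F i x * ((Tagged T x == Tagged T b) || (i != d))%:R.
have := @sum_prod_dep R I T F'.
rewrite [X in _ = X -> _](bigD1 d) //= big_mkcond /=.
have -> : \sum_(x : T d) F' d x = F d b.
  rewrite (bigD1 b) //= big1 => [|x xb]; rewrite /F' eq_Tagged /=.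
    by rewrite eqxx mulr1 addr0.
  by rewrite (negbTE xb) eqxx mulr0.
have -> : \prod_(j | j != d) \sum_(x : T j) F' j x =
          \prod_(j | j != d) \sum_(x : T j) F j x.
  apply: eq_bigr => j jd; apply: eq_bigr => x _.
  by rewrite /F' jd orbT mulr1.
move=> <-; rewrite big_mkcond; apply: eq_bigr => f _.
rewrite big_split /=.
have -> : \prod_(j : I) ((Tagged T (f j) == Tagged T b) || (j != d))%:R = (f d == b)%:R :> R.
  rewrite (bigD1 d) //= big1 => [|j /= jd]; last by rewrite jd orbT.
  by rewrite eq_Tagged /= eqxx orbF mulr1.
by case: (f d == b); rewrite ?mulr1 ?mulr0.
Qed.
Lemma swap4 {R : realType} {X Y : finType} (F : X -> Y -> X -> Y -> R) :
  \sum_x \sum_y \sum_x0 \sum_y0 F x y x0 y0 = \sum_x0 \sum_y0 \sum_x \sum_y F x y x0 y0.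
Proof.
rewrite pair_bigA; under eq_bigr do rewrite pair_bigA.
rewrite exchange_big.
rewrite [RHS]pair_bigA; under [RHS]eq_bigr do rewrite pair_bigA.
by [].
Qed.

Lemma step_gen {R : realType} {X Y : finType} (law : X -> Y -> R)
  (P : X -> Y -> X -> R) (Pi : X -> Y -> R) (g : X -> Y -> R) :
  \sum_x \sum_y (\sum_x0 \sum_y0 law x0 y0 * P x0 y0 x * Pi x y) * g x y
  = \sum_x0 \sum_y0 law x0 y0 * \sum_x (P x0 y0 x * \sum_y (Pi x y * g x y)).
Proof.
transitivity (\sum_x \sum_y \sum_x0 \sum_y0 law x0 y0 * P x0 y0 x * Pi x y * g x y).
  apply: eq_bigr => x _; apply: eq_bigr => y _.
  rewrite mulr_suml; apply: eq_bigr => x0 _; by rewrite mulr_suml.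
rewrite swap4; apply: eq_bigr => x0 _; apply: eq_bigr => y0 _.
rewrite mulr_sumr; apply: eq_bigr => x _.
rewrite mulr_sumr mulr_sumr; apply: eq_bigr => y _.
by rewrite !mulrA.
Qed.

Lemma sum_ind {R : realType} {X Y : finType} (x0 : X) (y0 : Y) (F : X -> Y -> R) :
  \sum_x \sum_y (if (x == x0) && (y == y0) then 1 else 0) * F x y = F x0 y0.
Proof.
rewrite (bigD1 x0) //= [X in _ + X]big1 => [|x /= xx0]; last first.
  by apply: big1 => y _; rewrite (negbTE xx0) mul0r.
rewrite addr0 (bigD1 y0) //= [X in _ + X]big1 => [|y /= yy0]; last first.
  by rewrite eqxx (negbTE yy0) mul0r.
by rewrite !eqxx mul1r addr0.
Qed.

Lemma law_ge0 {R : realType} {X Y : finType} (P : X -> Y -> X -> R) (Pi : X -> Y -> R)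
  (hP : forall x y, is_distr (P x y)) (hPi : forall x, is_distr (Pi x)) x0 y0 t x y :
  0 <= sa_law P Pi x0 y0 t x y.
Proof.
elim: t x y => [|t IH] x y /=; first by case: ifP.
apply: sumr_ge0 => u _; apply: sumr_ge0 => v _.
by rewrite mulr_ge0 ?mulr_ge0 //; [case: (hP u v) | case: (hPi x)].
Qed.

Lemma law_sum1 {R : realType} {X Y : finType} (P : X -> Y -> X -> R) (Pi : X -> Y -> R)
  (hP : forall x y, is_distr (P x y)) (hPi : forall x, is_distr (Pi x)) x0 y0 t :
  \sum_x \sum_y sa_law P Pi x0 y0 t x y = 1.
Proof.
elim: t => [|t IH] /=.
  rewrite -[RHS](sum_ind x0 y0 (fun _ _ => 1 : R)).
  by apply: eq_bigr => x _; apply: eq_bigr => y _; rewrite mulr1.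
transitivity (\sum_x \sum_y (\sum_u \sum_v sa_law P Pi x0 y0 t u v * P u v x * Pi x y) * (fun _ _ => 1) x y).
  by apply: eq_bigr => x _; apply: eq_bigr => y _; rewrite mulr1.
rewrite step_gen; rewrite -[RHS]IH; apply: eq_bigr => u _; apply: eq_bigr => v _.
rewrite -[RHS]mulr1; congr (_ * _).
transitivity (\sum_x P u v x); last by case: (hP u v).
apply: eq_bigr => x _; have [_ hs] := hPi x.
rewrite /=; under eq_bigr do rewrite mulr1.
by rewrite hs mulr1.
Qed.

Lemma pi_marg {R : realType} {S : finType} {D : nat} {A Z : 'I_D -> finType}
  (pi : S -> {dffun forall d : 'I_D, A d} -> R) (phi : forall d, S -> Z d)
  (pid : forall d, Z d -> A d -> R) (hpid : forall d z, is_distr (pid d z))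
  (hpi : forall s (a : {dffun forall d : 'I_D, A d}), pi s a = \prod_(d < D) pid d (phi d s) (a d))
  x d (h : A d -> R) :
  \sum_(y : {dffun forall d : 'I_D, A d}) pi x y * h (y d) = \sum_b pid d (phi d x) b * h b.
Proof.
rewrite (partition_big (fun y : {dffun forall d, A d} => y d) predT) //.
apply: eq_bigr => b _.
transitivity (\sum_(y : {dffun forall d : 'I_D, A d} | y d == b) pi x y * h b).
  by apply: eq_bigr => y /= /eqP ->.
rewrite -mulr_suml; under eq_bigr do rewrite hpi.
rewrite (sum_prod_dep1 (fun i a => pid i (phi i x) a)) big1 ?mulr1 // => i _.
by case: (hpid i (phi i x)).
Qed.

Lemma p_marg {R : realType} {S : finType} {D : nat} {A Z : 'I_D -> finType}
  (p : S -> {dffun forall d : 'I_D, A d} -> S -> R) (phi : forall d, S -> Z d)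
  (pd : forall d, Z d -> A d -> Z d -> R)
  (hp : forall s a, is_distr (p s a))
  (hpd : forall d z a, is_distr (pd d z a))
  (hi : forall s s' (a : {dffun forall d : 'I_D, A d}),
      \sum_(st : S | [forall d, phi d st == phi d s']) p s a st
      = \prod_(d < D) pd d (phi d s) (a d) (phi d s'))
  x0 y0 d (G : Z d -> R) :
  \sum_(x : S) p x0 y0 x * G (phi d x) = \sum_z pd d (phi d x0) (y0 d) z * G z.
Proof.
pose phiv x : {dffun forall e, Z e} := [ffun e => phi e x].
pose P (zv : {dffun forall e, Z e}) := \prod_e pd e (phi e x0) (y0 e) (zv e).
pose inner (zv : {dffun forall e, Z e}) := \sum_(x | phiv x == zv) p x0 y0 x.
have le_ip zv : inner zv <= P zv.
  rewrite /inner; case: (pickP (fun x => phiv x == zv)) => [s' /eqP <- | none].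
    rewrite le_eqVlt; apply/orP; left; apply/eqP.
    transitivity (\sum_(st | [forall e, phi e st == phi e s']) p x0 y0 st).
      apply: eq_bigl => st; apply/idP/idP => [/eqP E|/forallP E].
        by apply/forallP => e; move/ffunP: E => /(_ e); rewrite !ffunE => ->.
      by apply/eqP/ffunP => e; rewrite !ffunE; apply/eqP/E.
    by rewrite hi /P; apply: eq_bigr => e _; rewrite ffunE.
  rewrite big_pred0 //; apply: prodr_ge0 => e _.
  by case: (hpd e (phi e x0) (y0 e)).
have sumi : \sum_zv inner zv = 1.
  have [_ <-] := hp x0 y0.
  by rewrite (partition_big phiv predT) //.
have sumP : \sum_zv P zv = 1.
  rewrite /P (sum_prod_dep (fun e z => pd e (phi e x0) (y0 e) z)) big1 // => e _.
  by case: (hpd e (phi e x0) (y0 e)).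
have eqi zv : inner zv = P zv.
  have : \sum_zv (P zv - inner zv) = 0 by rewrite sumrB sumP sumi subrr.
  move/psumr_eq0P => H; apply/eqP; rewrite eq_sym -subr_eq0; apply/eqP/H => // w _.
  by rewrite subr_ge0.
rewrite (partition_big phiv predT) //=.
transitivity (\sum_(zv : {dffun forall e, Z e}) P zv * G (zv d)).
  apply: eq_bigr => zv _; rewrite -eqi /inner mulr_suml.
  by apply: eq_bigr => x /eqP <-; rewrite ffunE.
rewrite (partition_big (fun zv : {dffun forall e, Z e} => zv d) predT) //=.
apply: eq_bigr => z _.
transitivity (\sum_(zv : {dffun forall e, Z e} | zv d == z) P zv * G z).
  by apply: eq_bigr => zv /eqP ->.
rewrite -mulr_suml /P (sum_prod_dep1 (fun e z => pd e (phi e x0) (y0 e) z)).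
rewrite big1 ?mulr1 // => e _.
by case: (hpd e (phi e x0) (y0 e)).
Qed.

Lemma marg {R : realType} {S : finType} {D : nat} {A Z : 'I_D -> finType}
  (p : S -> {dffun forall d : 'I_D, A d} -> S -> R)
  (pi : S -> {dffun forall d : 'I_D, A d} -> R)
  (phi : forall d, S -> Z d)
  (pd : forall d, Z d -> A d -> Z d -> R)
  (pid : forall d, Z d -> A d -> R)
  (hp : forall s a, is_distr (p s a))
  (hpd : forall d z a, is_distr (pd d z a))
  (hpid : forall d z, is_distr (pid d z))
  (hi : forall s s' (a : {dffun forall d : 'I_D, A d}),
      \sum_(st : S | [forall d, phi d st == phi d s']) p s a st
      = \prod_(d < D) pd d (phi d s) (a d) (phi d s'))
  (hpi : forall s (a : {dffun forall d : 'I_D, A d}), pi s a = \prod_(d < D) pid d (phi d s) (a d))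
  s a d t (g : Z d -> A d -> R) :
  \sum_(x : S) \sum_(y : {dffun forall d : 'I_D, A d}) sa_law p pi s a t x y * g (phi d x) (y d)
  = \sum_(z : Z d) \sum_(b : A d) sa_law (pd d) (pid d) (phi d s) (a d) t z b * g z b.
Proof.
elim: t g => [|t IH] g /=.
  rewrite [RHS]sum_ind; exact: (sum_ind s a (fun x (y : {dffun forall d : 'I_D, A d}) => g (phi d x) (y d))).
rewrite (step_gen (sa_law p pi s a t) p pi (fun x (y : {dffun forall d : 'I_D, A d}) => g (phi d x) (y d))).
pose K z0 b0 := \sum_z pd d z0 b0 z * \sum_b (pid d z b * g z b).
transitivity (\sum_x0 \sum_(y0 : {dffun forall d : 'I_D, A d}) sa_law p pi s a t x0 y0 * K (phi d x0) (y0 d)).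
  apply: eq_bigr => x0 _; apply: eq_bigr => y0 _; congr (_ * _).
  transitivity (\sum_x p x0 y0 x * (fun z => \sum_b pid d z b * g z b) (phi d x)).
    apply: eq_bigr => x _; congr (_ * _).
    exact: (pi_marg _ _ _ hpid hpi x d (g (phi d x))).
  exact: (p_marg _ _ _ hp hpd hi x0 y0 d (fun z => \sum_b pid d z b * g z b)).
by rewrite (IH K) [RHS]step_gen.
Qed.

Definition Ed {R : realType} {D : nat} {A Z : 'I_D -> finType}
  (pd : forall d, Z d -> A d -> Z d -> R) (pid : forall d, Z d -> A d -> R)
  (rd : forall d, Z d -> A d -> R) d t (z0 : Z d) (b0 : A d) : R :=
  \sum_z \sum_b sa_law (pd d) (pid d) z0 b0 t z b * rd d z b.

Lemma exp_dec {R : realType} {S : finType} {D : nat} {A Z : 'I_D -> finType}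
  (p : S -> {dffun forall d : 'I_D, A d} -> S -> R)
  (r : S -> {dffun forall d : 'I_D, A d} -> R)
  (pi : S -> {dffun forall d : 'I_D, A d} -> R)
  (phi : forall d, S -> Z d)
  (pd : forall d, Z d -> A d -> Z d -> R)
  (rd : forall d, Z d -> A d -> R)
  (pid : forall d, Z d -> A d -> R)
  (hp : forall s a, is_distr (p s a))
  (hpd : forall d z a, is_distr (pd d z a))
  (hpid : forall d z, is_distr (pid d z))
  (hi : forall s s' (a : {dffun forall d : 'I_D, A d}),
      \sum_(st : S | [forall d, phi d st == phi d s']) p s a st
      = \prod_(d < D) pd d (phi d s) (a d) (phi d s'))
  (hr : forall s (a : {dffun forall d : 'I_D, A d}), r s a = \sum_(d < D) rd d (phi d s) (a d))
  (hpi : forall s (a : {dffun forall d : 'I_D, A d}), pi s a = \prod_(d < D) pid d (phi d s) (a d))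
  s a t :
  exp_reward p r pi s a t = \sum_(d < D) Ed pd pid rd d t (phi d s) (a d).
Proof.
rewrite /exp_reward.
under eq_bigr do under eq_bigr do rewrite hr mulr_sumr.
under eq_bigr do rewrite exchange_big.
rewrite exchange_big; apply: eq_bigr => d _.
exact: (marg _ _ _ _ _ hp hpd hpid hi hpi s a d t (rd d)).
Qed.

Lemma cvg_disc {R : realType} (gamma M : R) (u : nat -> R) :
  0 <= gamma -> gamma < 1 -> (forall t, `|u t| <= M) ->
  cvgn (series (fun t => gamma ^+ t * u t)).
Proof.
move=> g0 g1 hu.
have M0 : 0 <= M by apply: le_trans (hu 0%N).
apply: normed_cvg.
apply: (@series_le_cvg _ _ (geometric M gamma)).
- by move=> n /=.
- by move=> n; rewrite /geometric /= mulr_ge0 ?exprn_ge0.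
- move=> n; rewrite /geometric /= normrM ger0_norm ?exprn_ge0 // mulrC.
  by rewrite ler_wpM2r ?exprn_ge0.
- by apply: is_cvg_geometric_series; rewrite ger0_norm.
Qed.

Lemma lim_series_sum {R : realType} {I : finType} (w : I -> nat -> R) :
  (forall i, cvgn (series (w i))) ->
  limn (series (fun t => \sum_i w i t)) = \sum_i limn (series (w i)).
Proof.
move=> hc.
have -> : series (fun t => \sum_i w i t) = (fun n => \sum_i series (w i) n).
  apply/funext => n; rewrite /series /=; exact: exchange_big.
apply: cvg_lim => //.
apply: (cvg_big (op := +%R)) => //.
  exact: add_continuous.

Qed.

Lemma Ed_bound {R : realType} {D : nat} {A Z : 'I_D -> finType}
  (pd : forall d, Z d -> A d -> Z d -> R) (pid : forall d, Z d -> A d -> R)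
  (rd : forall d, Z d -> A d -> R)
  (hpd : forall d z a, is_distr (pd d z a))
  (hpid : forall d z, is_distr (pid d z)) d t z0 b0 :
  `|Ed pd pid rd d t z0 b0| <= \sum_z \sum_b `|rd d z b|.
Proof.
set M := \sum_z \sum_b `|rd d z b|.
have hM z b : `|rd d z b| <= M.
  rewrite /M (bigD1 z) //= (bigD1 b) //= -addrA lerDl.
  by rewrite addr_ge0 ?sumr_ge0 // => *; rewrite ?sumr_ge0.
have hl := law_ge0 _ _ (hpd d) (hpid d) z0 b0 t.
apply: le_trans (ler_norm_sum _ _ _) _.
apply: (@le_trans _ _ (\sum_z \sum_b sa_law (pd d) (pid d) z0 b0 t z b * M)).
  apply: ler_sum => z _; apply: le_trans (ler_norm_sum _ _ _) _.
  apply: ler_sum => b _; rewrite normrM ger0_norm //.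
  by rewrite ler_wpM2l.
rewrite -[X in _ <= X]mul1r -(law_sum1 _ _ (hpd d) (hpid d) z0 b0 t) mulr_suml.
by apply: ler_sum => z _; rewrite mulr_suml.
Qed.

Theorem theorem1 (R : realType) (S : finType) (D : nat)
  (A : 'I_D -> finType) (Z : 'I_D -> finType)
  (p : S -> {dffun forall d : 'I_D, A d} -> S -> R)
  (r : S -> {dffun forall d : 'I_D, A d} -> R)
  (gamma : R)
  (pi : S -> {dffun forall d : 'I_D, A d} -> R)
  (phi : forall d : 'I_D, S -> Z d)
  (pd : forall d : 'I_D, Z d -> A d -> Z d -> R)
  (rd : forall d : 'I_D, Z d -> A d -> R)
  (pid : forall d : 'I_D, Z d -> A d -> R) :
  0 <= gamma -> gamma < 1 ->
  (forall s a, is_distr (p s a)) ->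
  (forall s, is_distr (pi s)) ->
  (forall d z a, is_distr (pd d z a)) ->
  (forall d z, is_distr (pid d z)) ->
  (forall s s' (a : {dffun forall d : 'I_D, A d}),
      \sum_(st : S | [forall d, phi d st == phi d s']) p s a st
      = \prod_(d < D) pd d (phi d s) (a d) (phi d s')) ->
  (forall s (a : {dffun forall d : 'I_D, A d}),
      r s a = \sum_(d < D) rd d (phi d s) (a d)) ->
  (forall s (a : {dffun forall d : 'I_D, A d}),
      pi s a = \prod_(d < D) pid d (phi d s) (a d)) ->
  exists q : forall d : 'I_D, S -> A d -> R,
    forall s (a : {dffun forall d : 'I_D, A d}),
      Qpi p r gamma pi s a = \sum_(d < D) q d s (a d).
Proof.
move=> g0 g1 hp _ hpd hpid hi hr hpi.
exists (fun d s b => limn (series (fun t => gamma ^+ t * Ed pd pid rd d t (phi d s) b))).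
move=> s a; rewrite /Qpi.
have -> : (fun t => gamma ^+ t * exp_reward p r pi s a t) =
  (fun t => \sum_(d < D) gamma ^+ t * Ed pd pid rd d t (phi d s) (a d)).
  apply/funext => t.
  by rewrite (exp_dec _ _ _ _ _ _ _ hp hpd hpid hi hr hpi) mulr_sumr.
rewrite (lim_series_sum (fun d t => gamma ^+ t * Ed pd pid rd d t (phi d s) (a d))) //.
move=> d; apply: (@cvg_disc _ gamma (\sum_z \sum_b `|rd d z b|)) => // t.
exact: Ed_bound.
Qed.
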